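(* Let $K$ be either of the (two non-isomorphic) $2$-uniform tilings of the plane whose vertex types are $[3^1,4^2,6^1]$ and $[3^1,6^1,3^1,6^1]$. If $X$ is a map on the torus that is a quotient $X=K/\Gamma$ of $K$, then the vertices of $X$ form at most $3$ orbits under ${\rm Aut}(X)$.
   Context: A map is a polyhedral map: a cellular embedding of a connected graph in a closed surface such that the intersection of any two distinct faces is empty, a single vertex, or a single edge. For a vertex $u$, the faces containing $u$ form a cyclic sequence (the face-cycle at $u$); if this cyclic sequence consists of consecutive blocks of $n_1$ $p_1$-gons, then $n_2$ $p_2$-gons, ..., then $n_k$ $p_k$-gons, with cyclically consecutive $p_i$ distinct, then $u$ is said to have type $[p_1^{n_1},\dots,p_k^{n_k}]$ (defined up to cyclic shift and reversal). A $2$-uniform tiling is an edge-to-edge tiling of the Euclidean plane $\mathbb{R}^2$ by regular polygons whose symmetry group has exactly two orbits on the set of vertices; viewed as a map on the plane, its vertices have (at most) two types, listed as $[W;Z]$. (Up to isomorphism there are exactly $20$ such tilings.) For a map $K$ on the plane, a quotient of $K$ on the torus is a map $X$ on the torus together with a polyhedral covering map $\eta:K\to X$ with $X=K/\Gamma$, where $\Gamma\le {\rm Aut}(K)$ is a subgroup acting without fixed vertices, edges or faces and $K/\Gamma$ is homeomorphic to the torus. ${\rm Aut}(X)$ denotes the automorphism group of the map $X$, acting on its vertex set $V(X)$. *)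

(* Defs.v *)
From mathcomp Require Import all_boot all_order all_algebra.
Set Implicit Arguments. Unset Strict Implicit. Unset Printing Implicit Defensive.
Import GRing.Theory.
Local Open Scope ring_scope.

(* A vertex of a periodic tiling: a cell (a,b) of Z^2 (translation lattice)
   and a label among the 5 vertices of a fundamental cell. *)
Definition vert : Type := (int * int * 'I_5)%type.
Definition v0 : vert := (0, 0, ord0).

Definition mkv (a b : int) (i : nat) : vert := (a, b, inord i).

Definition shiftv (a b : int) (v : vert) : vert := (v.1.1 + a, v.1.2 + b, v.2).

(* Labels: 0 = middle vertex (type 3.6.3.6); 1,2 = top row, 3,4 = bottom row
   of a kagome band (type 3.4^2.6). Faces listed counterclockwise. *)
Definition common_faces : seq (seq vert) :=
  [:: [:: mkv 0 0 3; mkv 0 0 4; mkv 0 0 0];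
      [:: mkv 0 0 0; mkv 0 0 2; mkv 0 0 1];
      [:: mkv 1 0 0; mkv 1 0 1; mkv 0 0 2; mkv 0 0 0; mkv 0 0 4; mkv 1 0 3] ].

(* Tiling 1: kagome bands stacked by a pure vertical translation
   (triangles above triangles across each row of squares). *)
Definition tiling1 : seq (seq vert) :=
  common_faces ++
  [:: [:: mkv 0 0 1; mkv 0 0 2; mkv 0 1 4; mkv 0 1 3];
      [:: mkv 0 0 2; mkv 1 0 1; mkv 1 1 3; mkv 0 1 4] ].

(* Tiling 2: consecutive kagome bands shifted by one edge length
   (triangles above hexagons across each row of squares). *)
Definition tiling2 : seq (seq vert) :=
  common_faces ++
  [:: [:: mkv 0 0 1; mkv 0 0 2; mkv 0 1 3; mkv (-1) 1 4];
      [:: mkv 0 0 2; mkv 1 0 1; mkv 0 1 4; mkv 0 1 3] ].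

Section Maps.
Variable base : seq (seq vert).

Definition ofaceK (s : seq vert) : Prop :=
  exists2 f, f \in base & exists (a b : int) (r : nat), s = rot r (map (shiftv a b) f).

Definition ufaceK (s : seq vert) : Prop := ofaceK s \/ ofaceK (rev s).

Definition edgeK (u v : vert) : Prop :=
  exists2 s, ufaceK s & (u, v) \in zip s (rot 1 s).

Definition sameface (s t : seq vert) : Prop :=
  exists r, t = rot r s \/ t = rot r (rev s).

Definition autK (g : vert -> vert) : Prop :=
  bijective g /\ forall s, ufaceK s <-> ufaceK (map g s).

Definition subgroupAutK (G : (vert -> vert) -> Prop) : Prop :=
  [/\ G id,
      (forall g h, G g -> G h -> G (g \o h)),
      (forall g, G g -> exists2 h, G h & (forall v, h (g v) = v /\ g (h v) = v))
    & (forall g, G g -> autK g)].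

Variable G : (vert -> vert) -> Prop.

Definition orb (u v : vert) : Prop := exists2 g, G g & g u = v.

Definition acts_freely : Prop :=
  [/\ (forall g v, G g -> g v = v -> forall w, g w = w),
      (forall g u v, G g -> edgeK u v -> g u = v -> g v = u -> forall w, g w = w)
    & (forall g s, G g -> ufaceK s -> sameface s (map g s) -> forall w, g w = w)].

Definition nclasses (A : eqType) (P : A -> Prop) (R : A -> A -> Prop) (n : nat) : Prop :=
  exists reps : seq A,
    [/\ size reps = n, uniq reps, (forall x, x \in reps -> P x),
        (forall x y, x \in reps -> y \in reps -> R x y -> x = y)
      & (forall y, P y -> exists2 x, x \in reps & R x y)].

Definition edge_orb (e e' : vert * vert) : Prop :=
  exists2 g, G g & ((g e.1, g e.2) = e' \/ (g e.2, g e.1) = e').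

Definition face_orb (s t : seq vert) : Prop :=
  exists2 g, G g & sameface (map g s) t.

Definition euler_zero : Prop :=
  exists nv ne nf : nat,
    [/\ nclasses (fun _ : vert => True) orb nv,
        nclasses (fun e : vert * vert => edgeK e.1 e.2) edge_orb ne,
        nclasses ufaceK face_orb nf
      & (nv%:Z - ne%:Z + nf%:Z = 0)].

(* K/Gamma is homeomorphic to the torus: a closed (finitely many cells),
   orientable (Gamma preserves the orientation of K) surface of Euler
   characteristic 0. *)
Definition quotient_is_torus : Prop :=
  [/\ exists n, nclasses (fun _ : vert => True) orb n,
      (forall g s, G g -> ofaceK s -> ofaceK (map g s))
    & euler_zero].

Definition quotient_polyhedral : Prop :=
  (forall s, ufaceK s -> forall i j, (i < size s)%N -> (j < size s)%N ->
      orb (nth v0 s i) (nth v0 s j) -> i = j) /\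
  (forall s t, ufaceK s -> ufaceK t -> ~ face_orb s t ->
     let common := fun v => (exists2 u, u \in s & orb u v) /\
                            (exists2 w, w \in t & orb w v) in
     (forall v w, common v -> common w -> orb v w) \/
     (exists u1 u2 w1 w2,
        [/\ (u1, u2) \in zip s (rot 1 s), (w1, w2) \in zip t (rot 1 t),
            edge_orb (u1, u2) (w1, w2)
          & forall v, common v -> orb u1 v \/ orb u2 v])).

Definition torus_quotient : Prop :=
  [/\ subgroupAutK G, acts_freely, quotient_is_torus & quotient_polyhedral].

(* automorphisms of X = K/Gamma, represented by maps on V(K) inducing
   a bijection of V(X) = V(K)/Gamma that maps faces of X onto faces of X *)
Definition autX (tau : vert -> vert) : Prop :=
  [/\ (forall u v, orb u v <-> orb (tau u) (tau v)),
      (forall v, exists u, orb (tau u) v),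
      (forall s, ufaceK s -> exists2 t, ufaceK t &
          size t = size s /\ forall i, (i < size s)%N -> orb (tau (nth v0 s i)) (nth v0 t i))
    & (forall t, ufaceK t -> exists2 s, ufaceK s &
          size t = size s /\ forall i, (i < size s)%N -> orb (tau (nth v0 s i)) (nth v0 t i))].

Definition autX_at_most_3_orbits : Prop :=
  exists v1 v2 v3 : vert, forall v : vert, exists2 tau, autX tau &
     [\/ orb (tau v1) v, orb (tau v2) v | orb (tau v3) v].

End Maps.

(* Main.v *)
Require Import Defs.
From mathcomp Require Import all_boot all_order all_algebra.
From mathcomp Require Import zify.
Set Implicit Arguments. Unset Strict Implicit. Unset Printing Implicit Defensive.

Import GRing.Theory.
Section Aux.
Import GRing.Theory.


Lemma nth_rot' (T:Type) (x0:T) (s: seq T) n i : (n <= size s)%N -> (i < size s)%N ->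
  nth x0 (rot n s) i = nth x0 s ((i + n) %% size s).
Proof.
move=> Hn Hi; rewrite /rot nth_cat size_drop.
case: ltnP => H.
- rewrite nth_drop modn_small; [congr nth; lia| lia].
- rewrite nth_take; last lia.
  have E: (i + n = (i - (size s - n)) + size s)%N by lia.
  by rewrite E modnDr modn_small //; lia.
Qed.

Lemma ofaceK_nf K s : ofaceK K s -> exists f a b r,
  [/\ f \in K, (r <= size f)%N, size s = size f &
   forall i, (i < size s)%N -> nth v0 s i = shiftv a b (nth v0 f ((i + r) %% size f))].
Proof.
case=> f Hf [a [b [r ->]]].
have [Hr|Hr] := leqP r (size f).
- exists f, a, b, r; split => //; first by rewrite size_rot size_map.
  move=> i; rewrite size_rot size_map => Hi.
  have Hf0 : (0 < size f)%N by case: (size f) Hi.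
  rewrite nth_rot' ?size_map // (nth_map v0) ?size_map // ltn_pmod //.
- exists f, a, b, 0%N; split => //.
    by rewrite rot_oversize size_map //; apply: ltnW.
  move=> i; rewrite rot_oversize ?size_map; last by apply: ltnW.
  move=> Hi. rewrite (nth_map v0) //. rewrite addn0 modn_small //.
Qed.

Definition vsub (x y : vert) : int * int := ((x.1.1 - y.1.1)%R, (x.1.2 - y.1.2)%R).

Definition fc (K : seq (seq vert)) : bool :=
  all (fun f => all (fun f' => all (fun p => all (fun q =>
     [&& ((nth v0 f p).2 == (nth v0 f' q).2),
         ((nth v0 f ((p+1) %% size f)).2 == (nth v0 f' ((q+1) %% size f')).2) &
     (vsub (nth v0 f p) (nth v0 f' q) == vsub (nth v0 f ((p+1) %% size f)) (nth v0 f' ((q+1) %% size f')))]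
     ==> (f == f') && (p == q)) (iota 0 (size f'))) (iota 0 (size f))) K) K.

Lemma mkvE a b i (H : (i < 5)%N) : mkv a b i = (a, b, Ordinal H).
Proof. by rewrite /mkv; congr (_,_,_); apply: val_inj; rewrite /= inordK. Qed.

Lemma fc1 : fc tiling1. Proof. rewrite /tiling1 /common_faces !mkvE //. Qed.
Lemma fc2 : fc tiling2. Proof. rewrite /tiling2 /common_faces !mkvE //. Qed.



Lemma shiftv_eq a b a' b' x y : shiftv a b x = shiftv a' b' y ->
  [/\ x.2 = y.2, (x.1.1 - y.1.1 = a' - a)%R & (x.1.2 - y.1.2 = b' - b)%R].
Proof.
case: x y => [[x1 x2] xl] [[y1 y2] yl]; rewrite /shiftv /= => -[E1 E2 E3].
split => //; lia.
Qed.

Lemma mod_shift n i k r : (((i + k) %% n + r) %% n = ((i + r) %% n + k) %% n)%N.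
Proof. by rewrite !modnDml addnAC. Qed.

Lemma Uface K s t i j : fc K -> ofaceK K s -> ofaceK K t -> (i < size s)%N -> (j < size t)%N ->
 nth v0 s i = nth v0 t j -> nth v0 s ((i+1) %% size s) = nth v0 t ((j+1) %% size t) ->
 size s = size t /\ forall k, nth v0 s ((i+k) %% size s) = nth v0 t ((j+k) %% size t).
Proof.
move=> HK /ofaceK_nf [f [a [b [r [Hf Hr Hs Hn]]]]] /ofaceK_nf [f' [a' [b' [r' [Hf' Hr' Ht Hn']]]]] Hi Hj.
have Hs0 : (0 < size s)%N by case: (size s) Hi.
have Ht0 : (0 < size t)%N by case: (size t) Hj.
have Ks : forall k, nth v0 s ((i+k) %% size s) = shiftv a b (nth v0 f (((i + r) %% size f + k) %% size f)).
  by move=> k; rewrite Hn ?ltn_pmod // Hs mod_shift.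
have Kt : forall k, nth v0 t ((j+k) %% size t) = shiftv a' b' (nth v0 f' (((j + r') %% size f' + k) %% size f')).
  by move=> k; rewrite Hn' ?ltn_pmod // Ht mod_shift.
move=> E1 E2.
have E1' := E1; rewrite -(modn_small Hi) -(modn_small Hj) -(addn0 i) -(addn0 j) Ks Kt in E1'.
rewrite Ks Kt in E2.
rewrite Hs in Hs0; rewrite Ht in Ht0.
set p := ((i + r) %% size f)%N in E1' E2 Ks.
set q := ((j + r') %% size f')%N in E1' E2 Kt.
have Hp : (p < size f)%N by rewrite ltn_pmod.
have Hq : (q < size f')%N by rewrite ltn_pmod.
rewrite !addn0 (modn_small Hp) (modn_small Hq) in E1'.
have [L1 X1 Y1] := shiftv_eq E1'.
have [L2 X2 Y2] := shiftv_eq E2.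
move/allP: HK => /(_ f Hf)/allP/(_ f' Hf')/allP/(_ p).
rewrite mem_iota add0n Hp => /(_ isT)/allP/(_ q); rewrite mem_iota add0n Hq => /(_ isT)/implyP.
rewrite L1 L2 /vsub X1 Y1 X2 Y2 !eqxx => /(_ isT)/andP[/eqP ef /eqP epq].
subst f' q.
rewrite -epq in X1 Y1 Kt.
have ea : a = a' by lia.
have eb : b = b' by lia.
subst a' b'.
split; first by rewrite Hs Ht.
by move=> k; rewrite Ks Kt.
Qed.


Definition opres K (g : vert -> vert) := forall s, ofaceK K s -> ofaceK K (map g s).

Lemma propag K g h s i : fc K -> opres K g -> opres K h -> ofaceK K s -> (i < size s)%N ->
  g (nth v0 s i) = h (nth v0 s i) -> g (nth v0 s ((i+1) %% size s)) = h (nth v0 s ((i+1) %% size s)) ->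
  forall k, (k < size s)%N -> g (nth v0 s k) = h (nth v0 s k).
Proof.
move=> HK Hg Hh Hs Hi E1 E2 k Hk.
have Hs0 : (0 < size s)%N by case: (size s) Hi.
have E1' : nth v0 (map g s) i = nth v0 (map h s) i by rewrite !(nth_map v0).
have E2' : nth v0 (map g s) ((i+1) %% size (map g s)) = nth v0 (map h s) ((i+1) %% size (map h s)).
  by rewrite !size_map !(nth_map v0) ?ltn_pmod.
have [_ U] := @Uface K (map g s) (map h s) i i HK (Hg _ Hs) (Hh _ Hs) ltac:(by rewrite size_map) ltac:(by rewrite size_map) E1' E2'.
have := U (k + (size s - i))%N.
have idx : ((i + (k + (size s - i))) %% size s = k)%N.
  have -> : (i + (k + (size s - i)) = k + size s)%N by lia.
  by rewrite modnDr modn_small.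
by rewrite !size_map idx !(nth_map v0).
Qed.


Definition cv (a b : int) (l : nat) : vert := shiftv a b (mkv 0 0 l).
Lemma shm a b x y l : shiftv a b (mkv x y l) = cv (a + x)%R (b + y)%R l.
Proof. rewrite /cv /shiftv /mkv /=; congr (_,_,_); lia. Qed.
Lemma vcv (v : vert) : v = cv v.1.1 v.1.2 v.2.
Proof. case: v => [[x y] l]; rewrite /cv /shiftv /mkv /= !add0r inord_val //. Qed.

Definition hexF := [:: mkv 1 0 0; mkv 1 0 1; mkv 0 0 2; mkv 0 0 0; mkv 0 0 4; mkv 1 0 3].
Definition T1F := [:: mkv 0 0 3; mkv 0 0 4; mkv 0 0 0].
Definition T2F := [:: mkv 0 0 0; mkv 0 0 2; mkv 0 0 1].
Definition S1F := [:: mkv 0 0 1; mkv 0 0 2; mkv 0 1 4; mkv 0 1 3].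
Definition S2F := [:: mkv 0 0 2; mkv 1 0 1; mkv 0 1 4; mkv 0 1 3].

Lemma int_ind2 (P : int -> Prop) : P 0%R -> (forall a, P a -> P (a+1)%R) -> (forall a, P (a+1)%R -> P a) -> forall a, P a.
Proof.
move=> P0 Pu Pd; case=> n.
- elim: n => // n IH.
  by have := Pu _ IH; rewrite (_ : (Posz n + 1)%R = Posz n.+1) //; lia.
- elim: n => [|n IH].
  + by apply: Pd; rewrite (_ : (Negz 0 + 1)%R = 0%R).
  + apply: Pd; rewrite (_ : (Negz n.+1 + 1)%R = Negz n) //.
    by rewrite !NegzE; lia.
Qed.

End Aux.

Section Rig.
Variables (K : seq (seq vert)) (g h : vert -> vert).
Hypotheses (HK : fc K) (Hg : opres K g) (Hh : opres K h) (Hhex : hexF \in K)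
  (HT1 : T1F \in K) (HT2 : T2F \in K) (Hsq : S1F \in K \/ S2F \in K).
Let E v := g v = h v.

Lemma pf f a b i : f \in K -> (i < size f)%N -> E (shiftv a b (nth v0 f i)) ->
  E (shiftv a b (nth v0 f ((i+1) %% size f))) ->
  forall k, (k < size f)%N -> E (shiftv a b (nth v0 f k)).
Proof.
move=> Hf Hi E1 E2 k Hk.
have Hs : ofaceK K (map (shiftv a b) f).
  by exists f => //; exists a, b, 0%N; rewrite rot0.
have := @propag K g h _ i HK Hg Hh Hs; rewrite size_map !(nth_map v0) //; last first.
  by rewrite ltn_pmod //; case: (size f) Hi.
by move=> /(_ Hi E1 E2 k Hk); rewrite (nth_map v0).
Qed.

Definition Q a b := forall l, (l < 5)%N -> E (cv a b l).

Lemma hexQ a b : E (cv a b 2) -> E (cv a b 0) ->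
  [/\ Q a b, E (cv (a+1) b 0), E (cv (a+1) b 1) & E (cv (a+1) b 3)].
Proof.
move=> e2 e0.
have H := pf Hhex (i:=2) isT e2 e0.
have e4 : E (cv a b 4) := H 4%N isT.
have e10 : E (shiftv a b (mkv 1 0 0)) := H 0%N isT.
have e11 : E (shiftv a b (mkv 1 0 1)) := H 1%N isT.
have e13 : E (shiftv a b (mkv 1 0 3)) := H 5%N isT.
rewrite shm addr0 in e10; rewrite shm addr0 in e11; rewrite shm addr0 in e13.
have e3 : E (cv a b 3) := pf HT1 (i:=1) isT e4 e0 (k:=0) isT.
have e1 : E (cv a b 1) := pf HT2 (i:=0) isT e0 e2 (k:=2) isT.
split => //.
by move=> [|[|[|[|[|l]]]]] Hl //; move: Hl; rewrite !ltnS ltn0.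
Qed.

Lemma stepR a b : Q a b -> Q (a+1) b.
Proof.
move=> Hq; have [_ e0 e1 _] := hexQ (Hq 2%N isT) (Hq 0%N isT).
have e2 : E (cv (a+1) b 2) := pf HT2 (i:=2) isT e1 e0 (k:=1) isT.
by have [] := hexQ e2 e0.
Qed.

Lemma stepL a b : Q (a+1) b -> Q a b.
Proof.
move=> Hq.
have e10 : E (shiftv a b (mkv 1 0 0)) by rewrite shm addr0; exact: Hq 0%N isT.
have e11 : E (shiftv a b (mkv 1 0 1)) by rewrite shm addr0; exact: Hq 1%N isT.
have H := pf Hhex (i:=0) isT e10 e11.
by have [] := hexQ (H 2%N isT) (H 3%N isT).
Qed.

Lemma stepU a b : Q a b -> Q a (b+1).
Proof.
move=> Hq; have [_ _ e11 _] := hexQ (Hq 2%N isT) (Hq 0%N isT).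
have [e4 e3] : E (cv a (b+1) 4) /\ E (cv a (b+1) 3).
  case: Hsq => HS.
  - have H := pf HS (a:=a) (b:=b) (i:=0) isT (Hq 1%N isT) (Hq 2%N isT).
    have X4 : E (shiftv a b (mkv 0 1 4)) := H 2%N isT.
    have X3 : E (shiftv a b (mkv 0 1 3)) := H 3%N isT.
    by rewrite shm addr0 in X4; rewrite shm addr0 in X3.
  - have e11' : E (shiftv a b (mkv 1 0 1)) by rewrite shm addr0.
    have H := pf HS (a:=a) (b:=b) (i:=0) isT (Hq 2%N isT) e11'.
    have X4 : E (shiftv a b (mkv 0 1 4)) := H 2%N isT.
    have X3 : E (shiftv a b (mkv 0 1 3)) := H 3%N isT.
    by rewrite shm addr0 in X4; rewrite shm addr0 in X3.
have e0 : E (cv a (b+1) 0) := pf HT1 (i:=0) isT e3 e4 (k:=2) isT.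
have e2 : E (cv a (b+1) 2) := pf Hhex (i:=3) isT e0 e4 (k:=2) isT.
by have [] := hexQ e2 e0.
Qed.

Lemma stepD a b : Q a (b+1) -> Q a b.
Proof.
move=> Hq.
have e4 : E (shiftv a b (mkv 0 1 4)) by rewrite shm addr0; exact: Hq 4%N isT.
have e3 : E (shiftv a b (mkv 0 1 3)) by rewrite shm addr0; exact: Hq 3%N isT.
case: Hsq => HS.
- have H := pf HS (i:=2) isT e4 e3.
  have e1 : E (cv a b 1) := H 0%N isT.
  have e2 : E (cv a b 2) := H 1%N isT.
  have e0 : E (cv a b 0) := pf HT2 (i:=1) isT e2 e1 (k:=0) isT.
  by have [] := hexQ e2 e0.
- have H := pf HS (i:=2) isT e4 e3.
  have e2 : E (cv a b 2) := H 0%N isT.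
  have e11 : E (shiftv a b (mkv 1 0 1)) := H 1%N isT.
  have e0 : E (cv a b 0) := pf Hhex (i:=1) isT e11 e2 (k:=3) isT.
  by have [] := hexQ e2 e0.
Qed.

Lemma rigid : E (cv 0 0 2) -> E (cv 0 0 0) -> forall v, g v = h v.
Proof.
move=> e2 e0.
have [Q0 _ _ _] := hexQ e2 e0.
have QA : forall a, Q a 0.
  by apply: int_ind2 => // a; [apply: stepR | apply: stepL].
have QAB : forall a b, Q a b.
  by move=> a; apply: int_ind2 => // b; [apply: stepU | apply: stepD].
move=> v; rewrite (vcv v); exact: QAB _ _ _ (ltn_ord _).
Qed.

End Rig.


Definition lperm (l : 'I_5) : 'I_5 :=
  match nat_of_ord l with
  | 1 => @Ordinal 5 4 isT | 2 => @Ordinal 5 3 isT | 3 => @Ordinal 5 2 isT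
  | 4 => @Ordinal 5 1 isT | _ => l end.
Definition rho (v : vert) : vert := ((- v.1.1)%R, (- v.1.2)%R, lperm v.2).

Lemma lpermK l : lperm (lperm l) = l.
Proof. by case: l => [[|[|[|[|[|m]]]]] Hm] //; apply: val_inj. Qed.

Lemma lperm_inord k : (k < 5)%N -> lperm (inord k) = inord (nth 0%N [:: 0; 4; 3; 2; 1]%N k).
Proof.
by case: k => [|[|[|[|[|k]]]]] // _; apply: val_inj; rewrite /lperm /= ?inordK.
Qed.

Lemma rhoK v : rho (rho v) = v.
Proof. by case: v => [[x y] l]; rewrite /rho /= !opprK lpermK. Qed.

Lemma rho_shift a b v : rho (shiftv a b v) = shiftv (- a)%R (- b)%R (rho v).
Proof. by case: v => [[x y] l]; rewrite /rho /shiftv /= !opprD. Qed.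

Lemma shift_shift a b c d v : shiftv c d (shiftv a b v) = shiftv (a + c)%R (b + d)%R v.
Proof. by case: v => [[x y] l]; rewrite /shiftv /= !addrA. Qed.

Lemma shift0 v : shiftv 0 0 v = v.
Proof. by case: v => [[x y] l]; rewrite /shiftv /= !addr0. Qed.

Definition rhochk (K : seq (seq vert)) : bool :=
  all (fun f => has (fun f' => has (fun c => has (fun d => has (fun r =>
    map rho f == rot r (map (shiftv c d) f')) (iota 0 (size f'))) [:: (-1)%R; 0%R; 1%R])
     [:: (-1)%R; 0%R; 1%R]) K) K.

Lemma rc1 : rhochk tiling1. Proof. rewrite /tiling1 /common_faces !mkvE //. Qed.
Lemma rc2 : rhochk tiling2. Proof. rewrite /tiling2 /common_faces !mkvE //. Qed.

Lemma rot_rot_ex (T : Type) r r' (x : seq T) : (r' <= size x)%N -> exists k, rot r (rot r' x) = rot k x.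
Proof.
move=> Hr'; have [Hr|Hr] := leqP r (size x).
- by rewrite rot_add_mod //; eexists.
- by exists r'; rewrite rot_oversize // size_rot; apply: ltnW.
Qed.

Lemma opres_shift K c d : opres K (shiftv c d).
Proof.
move=> s [f Hf [a [b [r ->]]]]; exists f => //; exists (a + c)%R, (b + d)%R, r.
by rewrite map_rot -map_comp; congr rot; apply: eq_map => x /=; rewrite shift_shift.
Qed.

Lemma opres_rho K : rhochk K -> opres K rho.
Proof.
move=> HK s [f Hf [a [b [r ->]]]].
move/allP: HK => /(_ f Hf) /hasP [f' Hf' /hasP [c _ /hasP [d _ /hasP [r' Hr' /eqP E]]]].
rewrite mem_iota add0n in Hr'.
exists f' => //.
have [k Ek] := @rot_rot_ex _ r r' (map (shiftv (c - a)%R (d - b)%R) f') ltac:(rewrite size_map; lia).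
exists (c - a)%R, (d - b)%R, k; rewrite -Ek map_rot -map_comp.
rewrite (eq_map (g := shiftv (- a)%R (- b)%R \o rho)); last by move=> x /=; rewrite rho_shift.
rewrite map_comp E map_rot -map_comp; congr (rot _ (rot _ _)); apply: eq_map => x /=.
by rewrite shift_shift; congr shiftv; rewrite addrC.
Qed.

Lemma uf_map K g s : opres K g -> ufaceK K s -> ufaceK K (map g s).
Proof. by move=> Hg [H|H]; [left; apply: Hg | right; rewrite -map_rev; apply: Hg]. Qed.

Definition Q1F := [:: mkv 0 0 2; mkv 1 0 1; mkv 1 1 3; mkv 0 1 4].
Definition Q2F := [:: mkv 0 0 1; mkv 0 0 2; mkv 0 1 3; mkv (-1) 1 4].

Lemma tiling_facts K : K = tiling1 \/ K = tiling2 ->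
  [/\ fc K, rhochk K, hexF \in K, T1F \in K & T2F \in K] /\
  [/\ S1F \in K \/ S2F \in K,
      (forall f, f \in K -> size f = 6%N -> f = hexF) &
      exists2 f, f \in K & [/\ size f = 4%N, nth v0 f 0 = mkv 0 0 2 & nth v0 f 1 = mkv 1 0 1]].
Proof.
case=> ->.
- split; first by split; rewrite ?fc1 ?rc1 // /tiling1 /common_faces mem_cat !inE eqxx ?orbT.
  split.
  + by left; rewrite /tiling1 /common_faces mem_cat !inE eqxx ?orbT.
  + by move=> f; rewrite /tiling1 /common_faces mem_cat !inE => /orP[/or3P[]|/orP[]] /eqP ->.
  + by exists Q1F; rewrite // /tiling1 /common_faces mem_cat !inE eqxx ?orbT.
- split; first by split; rewrite ?fc2 ?rc2 // /tiling2 /common_faces mem_cat !inE eqxx ?orbT.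
  split.
  + by right; rewrite /tiling2 /common_faces mem_cat !inE eqxx ?orbT.
  + by move=> f; rewrite /tiling2 /common_faces mem_cat !inE => /orP[/or3P[]|/orP[]] /eqP ->.
  + by exists S2F; rewrite // /tiling2 /common_faces mem_cat !inE eqxx ?orbT.
Qed.

Lemma cveq a b l a' b' l' : a = a' -> b = b' -> l = l' -> cv a b l = cv a' b' l'.
Proof. by move=> -> -> ->. Qed.

Ltac cvl := repeat match goal with
 | |- (_ :: _) = (_ :: _) => apply: (f_equal2 cons)
 | |- cv _ _ _ = cv _ _ _ => apply: cveq; lia
 | |- [::] = [::] => reflexivity
end.

Lemma sigma_cv c d x y l : (l < 5)%N ->
  shiftv c d (rho (cv x y l)) = cv (c - x)%R (d - y)%R (nth 0%N [:: 0; 4; 3; 2; 1]%N l).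
Proof.
move=> Hl; rewrite /cv /rho /shiftv /mkv /= lperm_inord //; congr (_,_,_); lia.
Qed.

Lemma map_shift_cv x y (f : seq vert) : map (shiftv x y) f = map (fun v => shiftv x y v) f.
Proof. by []. Qed.

Lemma opres_comp K f h : opres K f -> opres K h -> opres K (f \o h).
Proof. by move=> Hf Hh s Hs; rewrite map_comp; apply/Hf/Hh. Qed.

Lemma oface_base K f a b : f \in K -> ofaceK K (map (shiftv a b) f).
Proof. by move=> Hf; exists f => //; exists a, b, 0%N; rewrite rot0. Qed.

Lemma nocase K f F g a b j : fc K -> f \in K -> size f = 4%N -> F \in K -> size F = 3%N ->
  opres K g -> (j < 3)%N ->
  g (nth v0 f 0) = shiftv a b (nth v0 F j) -> g (nth v0 f 1) = shiftv a b (nth v0 F ((j+1) %% 3)) -> False.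
Proof.
move=> HK Hf Sf HF SF Hg Hj E1 E2.
have Hsf : ofaceK K f by have := oface_base 0 0 Hf; rewrite (eq_map shift0) map_id.
have := @Uface K (map g f) (map (shiftv a b) F) 0 j HK (Hg _ Hsf) (oface_base a b HF).
rewrite !size_map Sf SF.
move=> /(_ isT Hj); rewrite !(nth_map v0) ?Sf ?SF ?ltn_pmod //.
by move=> /(_ E1 E2) [].
Qed.

Lemma mem_t1 : [/\ hexF \in tiling1, S1F \in tiling1 & Q1F \in tiling1].
Proof. by split; rewrite /tiling1 /common_faces mem_cat !inE eqxx ?orbT. Qed.
Lemma mem_t2 : [/\ hexF \in tiling2, S2F \in tiling2 & Q2F \in tiling2].
Proof. by split; rewrite /tiling2 /common_faces mem_cat !inE eqxx ?orbT. Qed.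

Lemma norot K G g c d : K = tiling1 \/ K = tiling2 -> acts_freely K G -> G g ->
  (forall v, g v = shiftv c d (rho v)) -> False.
Proof.
move=> HKt [Fv Fe Ff] Gg Hg.
have nofix : (forall w, g w = w) -> False.
  move=> /(_ (cv 0 0 1)); rewrite Hg sigma_cv // => /(congr1 (fun v : vert => nat_of_ord v.2)).
  by rewrite /cv /shiftv /mkv /= !inordK.
have [x Hc] : exists x, c = (x * 2)%R \/ c = (x*2 + 1)%R by exists (c %/ 2)%Z; lia.
have [y Hd] : exists y, d = (y * 2)%R \/ d = (y*2 + 1)%R by exists (d %/ 2)%Z; lia.
case: Hc => Hc; case: Hd => Hd.
- apply: (nofix); apply: (Fv g (cv x y 0) Gg); rewrite Hg sigma_cv //; apply: cveq => //; lia.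
- case: HKt => HK; subst K.
  + apply: (nofix); apply: (Ff g (map (shiftv x y) S1F) Gg).
      by left; apply: oface_base; case: mem_t1.
    have -> : map (shiftv x y) S1F = [:: cv x y 1; cv x y 2; cv x (y+1) 4; cv x (y+1) 3].
      by rewrite /S1F /= !shm; cvl.
    exists 2%N; left; rewrite /rot /= !Hg !sigma_cv //=; cvl.
  + apply: (nofix); apply: (Fe g (cv x (y+1) 3) (cv x y 2) Gg).
    * exists (map (shiftv x y) S2F); first by left; apply: oface_base; case: mem_t2.
      have -> : map (shiftv x y) S2F = [:: cv x y 2; cv (x+1) y 1; cv x (y+1) 4; cv x (y+1) 3].
        by rewrite /S2F /= !shm; cvl.
      by rewrite /rot /= !inE eqxx ?orbT.
    * by rewrite Hg sigma_cv //=; cvl.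
    * by rewrite Hg sigma_cv //=; cvl.
- apply: (nofix); apply: (Ff g (map (shiftv x y) hexF) Gg).
    by left; apply: oface_base; case: HKt => ->; [case: mem_t1|case: mem_t2].
  have -> : map (shiftv x y) hexF = [:: cv (x+1) y 0; cv (x+1) y 1; cv x y 2; cv x y 0; cv x y 4; cv (x+1) y 3].
    by rewrite /hexF /= !shm; cvl.
  exists 3%N; left; rewrite /rot /= !Hg !sigma_cv //=; cvl.
- case: HKt => HK; subst K.
  + apply: (nofix); apply: (Ff g (map (shiftv x y) Q1F) Gg).
      by left; apply: oface_base; case: mem_t1.
    have -> : map (shiftv x y) Q1F = [:: cv x y 2; cv (x+1) y 1; cv (x+1) (y+1) 3; cv x (y+1) 4].
      by rewrite /Q1F /= !shm; cvl.
    exists 2%N; left; rewrite /rot /= !Hg !sigma_cv //=; cvl.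
  + apply: (nofix); apply: (Fe g (cv x (y+1) 4) (cv (x+1) y 1) Gg).
    * exists (map (shiftv (x+1) y) Q2F); first by left; apply: oface_base; case: mem_t2.
      have -> : map (shiftv (x+1) y) Q2F = [:: cv (x+1) y 1; cv (x+1) y 2; cv (x+1) (y+1) 3; cv x (y+1) 4].
        by rewrite /Q2F /= !shm; cvl.
      by rewrite /rot /= !inE eqxx ?orbT.
    * by rewrite Hg sigma_cv //=; cvl.
    * by rewrite Hg sigma_cv //=; cvl.
Qed.

Lemma classify K G g : K = tiling1 \/ K = tiling2 -> acts_freely K G -> G g -> opres K g ->
  exists a b, forall v, g v = shiftv a b v.
Proof.
move=> HKt HF Gg Hg.
have [[HK Hrc Hhex HT1 HT2] [Hsq H6 [f4 Hf4 [Sf4 N0 N1]]]] := tiling_facts HKt.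
have Hho : ofaceK K hexF by have := oface_base 0 0 Hhex; rewrite (eq_map shift0) map_id.
have [f [a [b [r [Hf Hr Hs Hn]]]]] := ofaceK_nf (Hg _ Hho).
rewrite size_map in Hs.
have ef := H6 f Hf (esym Hs).
subst f.
have eg : forall i, (i < 6)%N -> g (nth v0 hexF i) = shiftv a b (nth v0 hexF ((i + r) %% 6)).
  by move=> i Hi; rewrite -(nth_map v0 v0 g) // Hn // size_map.
have c2 : cv 0 0 2 = mkv 0 0 2 by rewrite /cv shift0.
have c0 : cv 0 0 0 = mkv 0 0 0 by rewrite /cv shift0.
have S3 : size T1F = 3%N by []. have S3' : size T2F = 3%N by [].
move: Hr {Hn}; rewrite /= => Hr.
case: r Hr eg => [|[|[|[|[|[|[|r]]]]]]] Hr eg //.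
- exists a, b; refine (@rigid K g (shiftv a b) HK Hg (@opres_shift K a b) Hhex HT1 HT2 Hsq _ _).
  + by rewrite !c2; exact: eg 2%N isT.
  + by rewrite !c0; exact: eg 3%N isT.
- exfalso; apply: (@nocase K f4 T2F g a b 0 HK Hf4 Sf4 HT2 S3' Hg isT).
  + by rewrite N0; exact: eg 2%N isT.
  + by rewrite N1; exact: eg 1%N isT.
- exfalso; apply: (@nocase K f4 T1F g a b 1 HK Hf4 Sf4 HT1 S3 Hg isT).
  + by rewrite N0; exact: eg 2%N isT.
  + by rewrite N1; exact: eg 1%N isT.
- exfalso; apply: (@norot K G g (a + 1)%R b HKt HF Gg).
  refine (@rigid K g (shiftv (a+1)%R b \o rho) HK Hg (opres_comp (@opres_shift K _ _) (opres_rho Hrc)) Hhex HT1 HT2 Hsq _ _).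
  + rewrite /= sigma_cv //= c2; transitivity (shiftv a b (mkv 1 0 3)); first exact: eg 2%N isT.
    by rewrite shm; cvl.
  + rewrite /= sigma_cv //= c0; transitivity (shiftv a b (mkv 1 0 0)); first exact: eg 3%N isT.
    by rewrite shm; cvl.
- exfalso; apply: (@nocase K f4 T1F g (a+1)%R b 2 HK Hf4 Sf4 HT1 S3 Hg isT).
  + rewrite N0; transitivity (shiftv a b (mkv 1 0 0)); first exact: eg 2%N isT.
    by rewrite /= !shm; cvl.
  + rewrite N1; transitivity (shiftv a b (mkv 1 0 3)); first exact: eg 1%N isT.
    by rewrite /= !shm; cvl.
- exfalso; apply: (@nocase K f4 T2F g (a+1)%R b 2 HK Hf4 Sf4 HT2 S3' Hg isT).
  + rewrite N0; transitivity (shiftv a b (mkv 1 0 1)); first exact: eg 2%N isT.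
    by rewrite /= !shm; cvl.
  + rewrite N1; transitivity (shiftv a b (mkv 1 0 0)); first exact: eg 1%N isT.
    by rewrite /= !shm; cvl.
- exists a, b; refine (@rigid K g (shiftv a b) HK Hg (@opres_shift K a b) Hhex HT1 HT2 Hsq _ _).
  + by rewrite !c2; exact: eg 2%N isT.
  + by rewrite !c0; exact: eg 3%N isT.
Qed.


Section Final.
Variables (K : seq (seq vert)) (G : (vert -> vert) -> Prop).
Hypothesis HKt : K = tiling1 \/ K = tiling2.
Hypothesis Gid : G id.
Hypothesis Ginv : forall g, G g -> exists2 h, G h & (forall v, h (g v) = v /\ g (h v) = v).
Hypothesis Gsh : forall g, G g -> exists a b, forall v, g v = shiftv a b v.

Definition fam (tau : vert -> vert) := exists c d,
  (forall v, tau v = shiftv c d v) \/ (forall v, tau v = shiftv c d (rho v)).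

Lemma orefl v : orb G v v. Proof. by exists id. Qed.

Lemma fam_orb tau u v : fam tau -> orb G u v -> orb G (tau u) (tau v).
Proof.
move=> [c [d [Ht|Ht]]] [g Gg <-]; have [a [b Hg]] := Gsh Gg.
- exists g => //; rewrite !Ht !Hg !shift_shift; congr shiftv; lia.
- have [h Gh Hh] := Ginv Gg; have [a' [b' Hh']] := Gsh Gh.
  have E := (Hh v0).1; rewrite Hh' Hg shift_shift in E.
  have E1 := congr1 (fun w : vert => w.1.1) E; have E2 := congr1 (fun w : vert => w.1.2) E.
  rewrite /shiftv /= in E1 E2.
  exists h => //; rewrite !Ht Hh' Hg rho_shift !shift_shift; congr shiftv; lia.
Qed.

Lemma fam_inv tau : fam tau -> exists2 tau', fam tau' & forall v, tau' (tau v) = v /\ tau (tau' v) = v.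
Proof.
move=> [c [d [Ht|Ht]]].
- exists (shiftv (- c)%R (- d)%R); first by exists (- c)%R, (- d)%R; left.
  move=> v; rewrite !Ht !shift_shift ?addrN ?addNr; split; exact: shift0.
- exists tau; first by exists c, d; right.
  move=> v; rewrite !Ht rho_shift rhoK shift_shift ?addNr shift0; by split.
Qed.

Lemma fam_face tau s : fam tau -> ufaceK K s -> ufaceK K (map tau s).
Proof.
have [[HK Hrc _ _ _] _] := tiling_facts HKt.
move=> [c [d [Ht|Ht]]] Hs.
- rewrite (eq_map Ht); exact: uf_map (@opres_shift K c d) Hs.
- rewrite (eq_map Ht); exact: uf_map (opres_comp (@opres_shift K c d) (opres_rho Hrc)) Hs.
Qed.

Lemma fam_autX tau : fam tau -> autX K G tau.
Proof.
move=> Ft; have [tau' Ft' Hi] := fam_inv Ft.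
split.
- move=> u v; split; first exact: fam_orb.
  by move=> /(fam_orb Ft'); rewrite !(Hi _).1.
- by move=> v; exists (tau' v); rewrite (Hi v).2; by apply: orefl.
- move=> s Hs; exists (map tau s); first exact: fam_face.
  split; first by rewrite size_map.
  by move=> i Hi'; rewrite (nth_map v0) //; by apply: orefl.
- move=> t Ht; exists (map tau' t); first exact: fam_face.
  split; first by rewrite size_map.
  by move=> i; rewrite size_map => Hi'; rewrite (nth_map v0) // (Hi _).2; by apply: orefl.
Qed.

End Final.

Theorem theorem1 (K : seq (seq vert)) (HK : K = tiling1 \/ K = tiling2)
  (G : (vert -> vert) -> Prop) :
  torus_quotient K G -> autX_at_most_3_orbits K G.
Proof.
move=> [[Gid Gcomp Ginv Gaut] Hfree [_ Hor _] _].
have Gsh : forall g, G g -> exists a b, forall v, g v = shiftv a b v.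
  move=> g Gg; apply: (classify HK Hfree Gg) => s Hs; exact: Hor g s Gg Hs.
exists (cv 0 0 0), (cv 0 0 1), (cv 0 0 2) => v.
rewrite (vcv v); case: v => [[x y] [l Hl]] /=.
have FA : forall tau, fam tau -> autX K G tau by move=> tau; apply: fam_autX.
have Fs : fam (shiftv x y) by exists x, y; left.
have Fr : fam (fun w => shiftv x y (rho w)) by exists x, y; right.
have ss : forall l, shiftv x y (cv 0 0 l) = cv x y l.
  by move=> l'; rewrite /cv shift_shift !add0r.
case: l Hl => [|[|[|[|[|l]]]]] Hl //.
- exists (shiftv x y); first exact: FA.
  by apply: Or31; rewrite ss; by apply: orefl.
- exists (shiftv x y); first exact: FA.
  by apply: Or32; rewrite ss; by apply: orefl.
- exists (shiftv x y); first exact: FA.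
  by apply: Or33; rewrite ss; by apply: orefl.
- exists (fun w => shiftv x y (rho w)); first exact: FA.
  by apply: Or33; rewrite sigma_cv //= !subr0; apply: orefl.
- exists (fun w => shiftv x y (rho w)); first exact: FA.
  by apply: Or32; rewrite sigma_cv //= !subr0; apply: orefl.
Qed.
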